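(* For every max game $\mathcal R$, every sequence of greedy moves starting from an arbitrary routing is finite and terminates at a Nash-routing (so Nash-routings exist), and the price of stability is $PoS=1$, i.e. there is a Nash-routing whose social cost equals the minimum social cost over all routings.
   Context: A routing game is a tuple $\mathcal R=(\mathbf N,G,\mathcal P)$: players $\mathbf N=\{1,\dots,N\}$ ($N\ge1$), a finite graph $G=(V,E)$, and for each player $i$ a nonempty finite set $\mathcal P_i$ of paths in $G$ from a source $u_i$ to a destination $v_i$. A routing is $\mathbf p=[p_1,\dots,p_N]$ with $p_i\in\mathcal P_i$; $(p_i';\mathbf p_{-i})$ denotes the routing obtained by replacing $p_i$ with $p_i'$. $C_e(\mathbf p)$ is the number of players $j$ with $e\in p_j$; $C_i(\mathbf p)=\max_{e\in p_i}C_e(\mathbf p)$; $D_i(\mathbf p)=|p_i|$ (number of edges); $C(\mathbf p)=\max_{e}C_e(\mathbf p)$; $D(\mathbf p)=\max_i|p_i|$. A max game has player cost $pc_i(\mathbf p)=\max(C_i(\mathbf p),D_i(\mathbf p))$ and social cost $SC(\mathbf p)=\max(C(\mathbf p),D(\mathbf p))$. A greedy move by player $i$ takes $\mathbf p$ to $(p_i';\mathbf p_{-i})$ for some $p_i'\in\mathcal P_i$ with strictly smaller $pc_i$. A Nash-routing is a routing $\mathbf p$ with $pc_i(\mathbf p)\le pc_i(p_i';\mathbf p_{-i})$ for all $i$ and all $p_i'\in\mathcal P_i$. With $SC^*$ the minimum social cost over all routings and $\mathbf P$ the set of Nash-routings, $PoS=\inf_{\mathbf p\in\mathbf P}SC(\mathbf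 p)/SC^*$. *)

(* Defs.v *)
From mathcomp Require Import all_boot.
Set Implicit Arguments. Unset Strict Implicit. Unset Printing Implicit Defensive.

(* A finite (directed multi)graph: vertex type V, edge type E, ends e = (tail, head). *)
Definition is_path (V E : finType) (ends : E -> V * V) (u v : V) (p : seq E) : Prop :=
  exists ys : seq V, [/\ uniq (u :: ys), last u ys = v & map ends p = zip (u :: ys) ys].

Section Game.
Variables (E : finType) (N : nat).

Definition routing_t := 'I_N -> seq E.

Definition cong_e (r : routing_t) (e : E) : nat := #|[pred j : 'I_N | e \in r j]|.
Definition cong_i (r : routing_t) (i : 'I_N) : nat := \max_(e <- r i) cong_e r e.
Definition len_i (r : routing_t) (i : 'I_N) : nat := size (r i).
Definition pc (r : routing_t) (i : 'I_N) : nat := maxn (cong_i r i) (len_i r i).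
Definition congestion (r : routing_t) : nat := \max_(e : E) cong_e r e.
Definition dilation (r : routing_t) : nat := \max_(i < N) len_i r i.
Definition SC (r : routing_t) : nat := maxn (congestion r) (dilation r).

Definition upd (r : routing_t) (i : 'I_N) (q : seq E) : routing_t :=
  fun j => if j == i then q else r j.

Variable P : 'I_N -> seq (seq E).

Definition is_routing (r : routing_t) : Prop := forall i, r i \in P i.

Definition greedy_move (r r' : routing_t) : Prop :=
  exists i q, [/\ q \in P i, r' = upd r i q & pc r' i < pc r i].

Definition is_nash (r : routing_t) : Prop :=
  is_routing r /\ forall i q, q \in P i -> pc r i <= pc (upd r i q) i.

End Game.

(* Main.v *)
Require Import Defs.
From mathcomp Require Import all_boot.
From Stdlib Require Import Classical.
Set Implicit Arguments. Unset Strict Implicit. Unset Printing Implicit Defensive.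

Section L.
Variables (E : finType) (N : nat).
Implicit Types (r : routing_t E N).

Lemma cong_upd r i q e :
  cong_e (upd r i q) e <= maxn (cong_e r e) (pc (upd r i q) i).
Proof.
case: (boolP (e \in q)) => He.
  apply: leq_trans (leq_maxr _ _).
  apply: leq_trans (leq_maxl _ _).
  rewrite /cong_i; apply: (@leq_bigmax_seq _ _ xpredT (cong_e (upd r i q))) => //.
  by rewrite /upd eqxx.
apply: leq_trans (leq_maxl _ _).
apply: subset_leq_card; apply/subsetP => k; rewrite !inE /upd.
by case: eqP => // _ H; rewrite H in He.
Qed.

Lemma pc_upd_other r i q j : j != i ->
  pc (upd r i q) j <= maxn (pc r j) (pc (upd r i q) i).
Proof.
move=> ji; rewrite {1}/pc geq_max; apply/andP; split; last first.
  by rewrite /len_i /upd (negbTE ji) leq_max /pc leq_maxr.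
rewrite /cong_i {1}/upd (negbTE ji).
apply/bigmax_leqP_seq => e He _.
apply: leq_trans (cong_upd r i q e) _.
rewrite geq_max leq_maxr andbT leq_max; apply/orP; left.
rewrite /pc leq_max; apply/orP; left.
exact: (@leq_bigmax_seq _ _ xpredT (cong_e r)).
Qed.

Lemma pc_le_SC r i : pc r i <= SC r.
Proof.
rewrite /pc /SC geq_max; apply/andP; split.
  apply: leq_trans (leq_maxl _ _).
  apply/bigmax_leqP_seq => e _ _; exact: (leq_bigmax_cond (P:=xpredT)).
apply: leq_trans (leq_maxr _ _); exact: (leq_bigmax_cond (P:=xpredT)).
Qed.

Lemma SC_upd r i q : SC (upd r i q) <= maxn (SC r) (pc (upd r i q) i).
Proof.
rewrite {1}/SC geq_max; apply/andP; split.
  apply/bigmax_leqP => e _; apply: leq_trans (cong_upd r i q e) _.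
  rewrite geq_max leq_maxr andbT leq_max; apply/orP; left.
  apply: leq_trans (leq_maxl _ _); exact: (leq_bigmax_cond (P:=xpredT)).
apply/bigmax_leqP => j _.
case: (eqVneq j i) => [->|ji].
  by rewrite leq_max /pc leq_maxr orbT.
rewrite /len_i /upd (negbTE ji) leq_max; apply/orP; left.
apply: leq_trans (leq_maxr _ _); exact: (leq_bigmax_cond (P:=xpredT) (F := len_i r)).
Qed.

Lemma exp_max B a b : B ^ (maxn a b) <= B ^ a + B ^ b.
Proof.
by case: (leqP a b) => _; [exact: leq_addl | exact: leq_addr].
Qed.

Definition Phi r := \sum_(j < N) (N.+1) ^ (pc r j).

Lemma Phi_dec r i q : pc (upd r i q) i < pc r i -> Phi (upd r i q) < Phi r.
Proof.
move=> Hlt; set r' := upd r i q; set c := pc r' i.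
rewrite /Phi (bigD1 i) //= [X in _ < X](bigD1 i) //=.
have H1 : \sum_(j < N | j != i) N.+1 ^ pc r' j <=
          \sum_(j < N | j != i) (N.+1 ^ pc r j + N.+1 ^ c).
  apply: leq_sum => j ji; exact: leq_trans (leq_pexp2l (ltn0Sn N) (pc_upd_other r q ji)) (exp_max _ _ _).
rewrite -/c; rewrite big_split /= sum_nat_const in H1.
have Hc : #|[pred j : 'I_N | j != i]| = N.-1 by have := cardC1 i; rewrite card_ord => <-; apply: eq_card => j; rewrite !inE.
rewrite Hc in H1.
apply: leq_ltn_trans (leq_add (leqnn _) H1) _.
rewrite addnCA [X in _ < X]addnC ltn_add2l.
have HN : 0 < N by apply: leq_ltn_trans (ltn_ord i).
have -> : N.+1 ^ c + N.-1 * N.+1 ^ c = N * N.+1 ^ c.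
  by rewrite -{1}(mul1n (N.+1 ^ c)) -mulnDl add1n prednK.
apply: leq_trans (leq_pexp2l (ltn0Sn N) Hlt).
by rewrite expnS ltn_pmul2r ?expn_gt0.
Qed.

End L.

Theorem mainTheorem2 (V E : finType) (ends : E -> V * V) (N : nat) (hN : 0 < N)
    (src dst : 'I_N -> V) (P : 'I_N -> seq (seq E))
    (hPne : forall i, P i != [::])
    (hPpath : forall i q, q \in P i -> is_path ends (src i) (dst i) q) :
  (* every sequence of greedy moves from any routing is finite *)
  (forall r : routing_t E N, is_routing P r ->
     Acc (fun r2 r1 => greedy_move P r1 r2) r) /\
  (* a routing admitting no greedy move (end of a maximal sequence) is a Nash-routing *)
  (forall r : routing_t E N, is_routing P r ->
     (forall r', ~ greedy_move P r r') -> is_nash P r) /\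
  (* PoS = 1: some Nash-routing attains the optimal social cost *)
  (exists r : routing_t E N, is_nash P r /\
     forall r' : routing_t E N, is_routing P r' -> SC r <= SC r').
Proof.
have Hacc : forall r : routing_t E N, Acc (fun r2 r1 => greedy_move P r1 r2) r.
  have : forall (n : nat) (r : routing_t E N), Phi r < n -> Acc (fun r2 r1 => greedy_move P r1 r2) r.
    elim=> [|n IH] r Hr; first by rewrite ltn0 in Hr.
    constructor => r' [i [q [_ -> Hlt]]].
    apply: IH; rewrite -ltnS; apply: leq_trans Hr; exact: Phi_dec.
  by move=> H r; apply: (H (Phi r).+1).
have Hnash : forall r : routing_t E N, is_routing P r ->
     (forall r', ~ greedy_move P r r') -> is_nash P r.
  move=> r Hr Hno; split => // i q Hq; rewrite leqNgt; apply/negP => Hlt.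
  by apply: (Hno (upd r i q)); exists i, q.
split; first by move=> r _; apply: Hacc.
split; first exact: Hnash.
have Hopt : forall (n : nat) (r : routing_t E N), is_routing P r -> SC r <= n ->
    exists r0, is_routing P r0 /\ forall r', is_routing P r' -> SC r0 <= SC r'.
  elim=> [|n IH] r Hr Hn.
    by exists r; split => // r' _; apply: leq_trans Hn _.
  destruct (classic (exists r', is_routing P r' /\ SC r' < SC r)) as [[r' [Hr' Hlt]]|Hno].
    by apply: (IH r') => //; rewrite -ltnS; apply: leq_trans Hn.
  exists r; split => // r' Hr'; rewrite leqNgt; apply/negP => Hlt.
  by apply: Hno; exists r'.
have Hrt : is_routing P (fun i => head [::] (P i)).
  by move=> i; case: (P i) (hPne i) => //= a s _; rewrite mem_head.
have [r0 [Hr0 Hmin]] := Hopt _ _ Hrt (leqnn _).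
have Hdesc : forall r, Acc (fun r2 r1 => greedy_move P r1 r2) r -> is_routing P r ->
    exists rs, is_nash P rs /\ SC rs <= SC r.
  move=> r; elim=> {}r _ IH Hr.
  destruct (classic (exists r', greedy_move P r r')) as [[r' Hg]|Hno].
    have [rs [Hrs Hle]] : exists rs, is_nash P rs /\ SC rs <= SC r'.
      apply: IH => //; case: Hg => i [q [Hq -> _]] j; rewrite /upd; by case: eqP => [->|_].
    exists rs; split => //; apply: leq_trans Hle _.
    case: Hg => i [q [Hq -> Hlt]].
    apply: leq_trans (SC_upd r i q) _; rewrite geq_max leqnn /=.
    exact: leq_trans (ltnW Hlt) (pc_le_SC r i).
  exists r; split => //; apply: Hnash => // r' Hg; apply: Hno; by exists r'.
have [rs [Hrs Hle]] := Hdesc r0 (Hacc r0) Hr0.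
exists rs; split => // r' Hr'; apply: leq_trans Hle (Hmin r' Hr').
Qed.
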